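(* Let $(\Sigma_+,\Sigma_-,N_1,N_2,N_3)$ be a solution of the Wainwright–Hsu system satisfying the constraint, with $N_1<0$, $N_2=N_3>0$ and $\Sigma_-=0$. Then $\lim_{\tau\to\infty}\Sigma_+=\frac12$, $\lim_{\tau\to\infty}N_1=0$, $\lim_{\tau\to\infty}N_2=\infty$ and $\lim_{\tau\to\infty}N_1N_2=-\frac14$.
   Context: Wainwright–Hsu system: for functions $N_1,N_2,N_3,\Sigma_+,\Sigma_-$ of $\tau\in\mathbb{R}$ (prime denotes $d/d\tau$), $N_1'=(q-4\Sigma_+)N_1$, $N_2'=(q+2\Sigma_++2\sqrt3\Sigma_-)N_2$, $N_3'=(q+2\Sigma_+-2\sqrt3\Sigma_-)N_3$, $\Sigma_+'=-(2-q)\Sigma_+-3S_+$, $\Sigma_-'=-(2-q)\Sigma_--3S_-$, where $q=2(\Sigma_+^2+\Sigma_-^2)$, $S_+=\frac12[(N_2-N_3)^2-N_1(2N_1-N_2-N_3)]$, $S_-=\frac{\sqrt3}{2}(N_3-N_2)(N_1-N_2-N_3)$, together with the constraint $\Sigma_+^2+\Sigma_-^2+\frac34[N_1^2+N_2^2+N_3^2-2(N_1N_2+N_2N_3+N_1N_3)]=1$. The set $\{N_2=N_3,\ \Sigma_-=0\}$ is invariant under the flow. *)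

(* Defs.v *)
From Stdlib Require Import Reals.
From Coquelicot Require Import Coquelicot.
Open Scope R_scope.

Definition WH_q (Sp Sm : R) : R := 2 * (Sp ^ 2 + Sm ^ 2).

Definition WH_Sp (n1 n2 n3 : R) : R :=
  / 2 * ((n2 - n3) ^ 2 - n1 * (2 * n1 - n2 - n3)).

Definition WH_Sm (n1 n2 n3 : R) : R :=
  sqrt 3 / 2 * (n3 - n2) * (n1 - n2 - n3).

Definition WH_solution (N1 N2 N3 Sp Sm : R -> R) : Prop :=
  forall t : R,
    is_derive N1 t ((WH_q (Sp t) (Sm t) - 4 * Sp t) * N1 t) /\
    is_derive N2 t ((WH_q (Sp t) (Sm t) + 2 * Sp t + 2 * sqrt 3 * Sm t) * N2 t) /\
    is_derive N3 t ((WH_q (Sp t) (Sm t) + 2 * Sp t - 2 * sqrt 3 * Sm t) * N3 t) /\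
    is_derive Sp t (- (2 - WH_q (Sp t) (Sm t)) * Sp t - 3 * WH_Sp (N1 t) (N2 t) (N3 t)) /\
    is_derive Sm t (- (2 - WH_q (Sp t) (Sm t)) * Sm t - 3 * WH_Sm (N1 t) (N2 t) (N3 t)) /\
    Sp t ^ 2 + Sm t ^ 2
      + 3 / 4 * (N1 t ^ 2 + N2 t ^ 2 + N3 t ^ 2
                 - 2 * (N1 t * N2 t + N2 t * N3 t + N1 t * N3 t)) = 1.

(* Main.v *)
Require Import Defs.
From Stdlib Require Import Reals Lra Psatz Classical.
From Coquelicot Require Import Coquelicot.
Open Scope R_scope.

Lemma nonincr (f df : R -> R) T :
  (forall t, is_derive f t (df t)) -> (forall t, T <= t -> df t <= 0) ->
  forall t, T <= t -> f t <= f T.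
Proof.
  intros Hd Hn t Ht.
  destruct (Req_dec t T) as [->|Hne]; [lra|].
  destruct (MVT_gen f T t df) as [c [Hc Hfc]].
  - intros; apply Hd.
  - intros; apply derivable_continuous_pt; exists (df x); apply is_derive_Reals; apply Hd.
  - rewrite Rmin_left in Hc by lra. rewrite Rmax_right in Hc by lra.
    assert (df c <= 0) by (apply Hn; lra). nra.
Qed.

Definition EvL (f : R -> R) (l : R) := forall eps, 0 < eps -> exists M, forall t, M < t -> Rabs (f t - l) < eps.

Lemma EvL_lim f l : EvL f l -> is_lim f p_infty (Finite l).
Proof.
  intros H. apply is_lim_spec. intros eps. destruct eps as [e he]. simpl.
  destruct (H e he) as [M HM]. exists M. intros; apply HM; auto.
Qed.

Lemma exp_small C a : 0 <= C -> 0 < a -> forall eps, 0 < eps ->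
  exists M, forall t, M < t -> C * / exp (a * t) < eps.
Proof.
  intros HC Ha eps He. exists (C / (a * eps)). intros t Ht.
  assert (0 <= C / (a*eps)) by (apply Rle_mult_inv_pos; nra).
  pose proof (exp_ineq1_le (a*t)).
  assert (Hp : 0 < exp (a*t)) by apply exp_pos.
  assert (C < eps * (a * t)).
  { apply (Rmult_lt_compat_l (a*eps)) in Ht; [|nra].
    replace (a * eps * (C / (a * eps))) with C in Ht by (field; lra). nra. }
  apply (Rmult_lt_reg_r (exp (a*t))); auto.
  rewrite Rmult_assoc, Rinv_l by lra. nra.
Qed.

Definition RS (S m n : R -> R) := forall t,
  is_derive m t ((2 * S t ^ 2 - 4 * S t) * m t) /\
  is_derive n t ((2 * S t ^ 2 + 2 * S t) * n t) /\
  is_derive S t ((1 - S t ^ 2) * (1 - 2 * S t) + 9 / 4 * m t ^ 2) /\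
  S t ^ 2 + 3 / 4 * m t ^ 2 - 3 * m t * n t = 1 /\ m t < 0 /\ 0 < n t.

Ltac subst_der H :=
  match type of H with is_derive ?f ?x ?v =>
    replace (Derive (fun y => f y) x) with v by (symmetry; apply is_derive_unique; exact H) end.
Lemma nondecr (f df : R -> R) T :
  (forall t, is_derive f t (df t)) -> (forall t, T <= t -> 0 <= df t) ->
  forall t, T <= t -> f T <= f t.
Proof.
  intros Hd Hn t Ht.
  enough (- f t <= - f T) by lra.
  apply (nonincr (fun s => - f s) (fun s => - df s) T); auto.
  - intros s. apply (is_derive_opp f s (df s)). apply Hd.
  - intros s Hs. specialize (Hn s Hs). lra.
Qed.

Lemma d_gexp (S : R -> R) a t v : is_derive S t v ->
  is_derive (fun s => (S s - 1/2) * exp (a*s)) t ((v + a * (S t - 1/2)) * exp (a*t)).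
Proof. intros H. auto_derive. - repeat split; eexists; eauto. - subst_der H. ring. Qed.

Lemma d_mexp (m : R -> R) a t v : is_derive m t v ->
  is_derive (fun s => - m s * exp (a*s)) t ((- v - a * m t) * exp (a*t)).
Proof. intros H. auto_derive. - repeat split; eexists; eauto. - subst_der H. ring. Qed.

Lemma d_H (S : R -> R) a b c t v : is_derive S t v ->
  is_derive (fun s => (S s - 1/2) * exp (a*s) + c * exp (b*s)) t
    ((v + a * (S t - 1/2)) * exp (a*t) + c * b * exp (b*t)).
Proof. intros H. auto_derive. - repeat split; eexists; eauto. - subst_der H. ring. Qed.

Lemma d_K (S m n : R -> R) t vS vm vn : is_derive S t vS -> is_derive m t vm -> is_derive n t vn ->
  m t < 0 -> 0 < n t ->
  is_derive (fun s => (S s - 1/2)^3 * exp(6*s) * / (- m s * n s^2)) t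
   ((3 * (S t - 1/2)^2 * vS * exp(6*t) + (S t - 1/2)^3 * 6 * exp(6*t)) / (- m t * n t^2)
    - (S t - 1/2)^3 * exp(6*t) * (- vm * n t^2 - m t * 2 * n t * vn) / (- m t * n t^2)^2).
Proof.
  intros HS Hm Hn h1 h2. auto_derive.
  - repeat split; try (eexists; eassumption). apply Rgt_not_eq. 
    assert (0 < n t * n t) by nra. nra.
  - subst_der HS. subst_der Hm. subst_der Hn. field. split; lra.
Qed.

Lemma d_y (S m n : R -> R) t vm vn : is_derive m t vm -> is_derive n t vn ->
  is_derive (fun s => - (m s * n s)) t (- (vm * n t + m t * vn)).
Proof. intros Hm Hn. auto_derive. - repeat split; eexists; eauto. - subst_der Hm. subst_der Hn. ring. Qed.
Lemma deq (f : R -> R) (x l l' : R) : is_derive f x l -> l = l' -> is_derive f x l'.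
Proof. intros H ->; exact H. Qed.

Lemma S_lim S m n : RS S m n -> EvL S (1/2).
Proof.
  intros H.
  set (K := fun s => (S s - 1/2)^3 * exp(6*s) * / (- m s * n s^2)).
  assert (HKd : forall t, is_derive K t (27/4 * (S t - 1/2)^2 * m t^2 * exp(6*t) / (- m t * n t^2))).
  { intros t. destruct (H t) as (Hm & Hn & HS & Hc & Hm0 & Hn0).
    eapply deq. exact (d_K S m n t _ _ _ HS Hm Hn Hm0 Hn0).
    field. split; lra. }
  assert (HKs : forall t, 0 < K t <-> 1/2 < S t).
  { intros t. destruct (H t) as (Hm & Hn & HS & Hc & Hm0 & Hn0).
    assert (Hp : 0 < exp (6*t) * / (- m t * n t^2)).
    { apply Rmult_lt_0_compat. apply exp_pos. apply Rinv_0_lt_compat. 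
      assert (0 < n t ^2) by nra. nra. }
    unfold K. rewrite Rmult_assoc. split; intros Q.
    - destruct (Rlt_or_le (1/2) (S t)) as [?|Hle]; auto.
      assert ((S t - 1/2)^3 <= 0).
      { replace ((S t - 1/2)^3) with ((S t - 1/2) * (S t - 1/2)^2) by ring.
        apply Rmult_le_0_r; [lra| nra]. }
      nra.
    - apply Rmult_lt_0_compat; auto. apply pow_lt. lra. }
  assert (Hb : forall t, S t ^2 < 1).
  { intros t. destruct (H t) as (Hm & Hn & HS & Hc & Hm0 & Hn0). nra. }
  destruct (classic (exists T, 0 < K T)) as [[T HT] | HA].
  -
    assert (HST : forall t, T <= t -> 1/2 < S t).
    { intros t Ht. apply HKs. pose proof (nondecr K _ T HKd) as N.
      assert (K T <= K t). { apply N; auto. intros s _.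
        destruct (H s) as (Hm & Hn & HS & Hc & Hm0 & Hn0).
        assert (0 < - m s * n s ^2) by (assert (0 < n s ^2) by nra; nra).
        unfold Rdiv; apply Rmult_le_pos; [| left; apply Rinv_0_lt_compat; auto].
        assert (0 <= (S s - 1/2)^2) by apply pow2_ge_0. pose proof (exp_pos (6*s)). 
        assert (0 <= m s ^2) by apply pow2_ge_0.
        apply Rmult_le_pos; [|lra]. apply Rmult_le_pos; [|lra]. lra. }
      lra. }
    set (y := fun s => - (m s * n s)).
    assert (Hy : forall t, T <= t -> y T <= y t).
    { apply (nondecr y (fun s => y s * (4 * S s ^2 - 2 * S s))).
      - intros t. destruct (H t) as (Hm & Hn & HS & Hc & Hm0 & Hn0).
        eapply deq. exact (d_y S m n t _ _ Hm Hn). unfold y. ring.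
      - intros t Ht. specialize (HST t Ht). destruct (H t) as (Hm & Hn & HS & Hc & Hm0 & Hn0).
        unfold y. apply Rmult_le_pos; nra. }
    destruct (H T) as (_ & _ & _ & HcT & HmT & HnT).
    set (d := 3 * y T).
    assert (Hd0 : 0 < d) by (unfold d, y; nra).
    assert (Hd1 : d < 3/4) by (specialize (HST T (Rle_refl _)); unfold d, y; nra).
    assert (Hdl : forall t, T <= t -> d <= 1 - S t ^2).
    { intros t Ht. specialize (Hy t Ht). destruct (H t) as (Hm & Hn & HS & Hc & Hm0 & Hn0).
      unfold d. unfold y in *. nra. }
    set (z := fun s => - m s * exp (3/2 * s)).
    assert (Hz : forall t, T <= t -> z t <= z T).
    { apply (nonincr z (fun s => (- ((2 * S s ^ 2 - 4 * S s) * m s) - 3/2 * m s) * exp (3/2*s))).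
      - intros t. destruct (H t) as (Hm & Hn & HS & Hc & Hm0 & Hn0). exact (d_mexp m _ t _ Hm).
      - intros t Ht. specialize (HST t Ht). specialize (Hb t).
        destruct (H t) as (Hm & Hn & HS & Hc & Hm0 & Hn0).
        assert (2 * S t ^2 - 4 * S t + 3/2 < 0) by nra.
        pose proof (exp_pos (3/2*t)).
        replace ((- ((2 * S t ^ 2 - 4 * S t) * m t) - 3/2 * m t)) with ((- m t) * (2 * S t ^2 - 4 * S t + 3/2)) by ring.
        assert ((- m t) * (2 * S t ^2 - 4 * S t + 3/2) < 0) by nra. nra. }
    set (c := 9/4 * z T ^2 / (3 - 2*d)).
    set (HH := fun s => (S s - 1/2) * exp ((2*d)*s) + c * exp ((2*d-3)*s)).
    assert (HHd : forall t, T <= t -> HH t <= HH T).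
    { apply (nonincr HH (fun s => ((1 - S s ^ 2) * (1 - 2 * S s) + 9 / 4 * m s ^ 2 + 2*d * (S s - 1/2)) * exp ((2*d)*s) + c * (2*d-3) * exp ((2*d-3)*s))).
      - intros t. destruct (H t) as (Hm & Hn & HS & Hc & Hm0 & Hn0). exact (d_H S _ _ c t _ HS).
      - intros t Ht. specialize (HST t Ht). specialize (Hdl t Ht). specialize (Hz t Ht).
        destruct (H t) as (Hm & Hn & HS & Hc & Hm0 & Hn0).
        assert (A1 : (1 - S t ^ 2) * (1 - 2 * S t) + 9 / 4 * m t ^ 2 + 2*d * (S t - 1/2) <= 9/4 * m t ^2).
        { replace ((1 - S t ^ 2) * (1 - 2 * S t)) with (-2 * (1 - S t^2) * (S t - 1/2)) by field. nra. }
        assert (EE : exp (3/2*t) * exp (3/2*t) = exp (3*t)) by (rewrite <- exp_plus; f_equal; lra).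
        assert (E2 : exp ((2*d-3)*t) * exp (3*t) = exp ((2*d)*t)) by (rewrite <- exp_plus; f_equal; lra).
        pose proof (exp_pos (3/2*t)). pose proof (exp_pos ((2*d-3)*t)). pose proof (exp_pos (3*t)).
        pose proof (exp_pos ((2*d)*t)).
        assert (A2 : m t ^2 * exp (3*t) <= z T ^2).
        { assert (Ha : 0 <= - m t * exp (3/2*t)) by (apply Rmult_le_pos; lra).
          replace (m t ^2 * exp (3*t)) with ((- m t * exp (3/2*t))^2) by (rewrite <- EE; ring).
          apply pow_incr. split; auto. }
        assert (A3 : exp ((2*d)*t) * m t ^2 <= z T ^2 * exp ((2*d-3)*t)).
        { rewrite <- E2. replace (exp ((2*d-3)*t) * exp (3*t) * m t ^2) with ((m t ^2 * exp (3*t)) * exp ((2*d-3)*t)) by ring.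
          apply Rmult_le_compat_r; lra. }
        assert (Cc : c * (2*d-3) = - (9/4 * z T ^2)) by (unfold c; field; lra).
        rewrite Cc.
        assert (0 <= m t ^ 2) by nra. 
        assert (((1 - S t ^ 2) * (1 - 2 * S t) + 9 / 4 * m t ^ 2 + 2*d * (S t - 1/2)) * exp ((2*d)*t) <= 9/4 * m t ^2 * exp ((2*d)*t)) by (apply Rmult_le_compat_r; lra).
        nra. }
    assert (Hc0 : 0 <= c).
    { unfold c. apply Rmult_le_pos. nra. left; apply Rinv_0_lt_compat; lra. }
    assert (HH0 : 0 <= HH T).
    { unfold HH. specialize (HST T (Rle_refl _)). pose proof (exp_pos ((2*d)*T)).
      pose proof (exp_pos ((2*d-3)*T)). nra. }
    intros eps He. destruct (exp_small (HH T) (2*d) HH0 ltac:(lra) eps He) as [M HM].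
    exists (Rmax M T). intros t Ht.
    assert (Mt : M < t) by (eapply Rle_lt_trans; [apply Rmax_l| exact Ht]).
    assert (Tt : T <= t) by (left; eapply Rle_lt_trans; [apply Rmax_r| exact Ht]).
    specialize (HM t Mt). specialize (HHd t Tt). specialize (HST t Tt).
    pose proof (exp_pos ((2*d)*t)). pose proof (exp_pos ((2*d-3)*t)).
    assert (HHt : HH t = (S t - 1/2) * exp ((2*d)*t) + c * exp ((2*d-3)*t)) by reflexivity.
    assert (0 <= c * exp ((2*d-3)*t)) by (apply Rmult_le_pos; lra).
    assert ((S t - 1/2) * exp ((2*d)*t) <= HH T) by lra.
    assert (S t - 1/2 <= HH T * / exp ((2*d)*t)).
    { apply (Rmult_le_reg_r (exp ((2*d)*t))); auto. rewrite (Rmult_assoc (HH T)), Rinv_l; lra. }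
    rewrite Rabs_right; lra.
  -
    assert (HA' : forall t, S t <= 1/2).
    { intros t. destruct (Rlt_or_le (1/2) (S t)) as [Q|Q]; auto.
      exfalso. apply HA. exists t. apply HKs; auto. }
    assert (Hmono : forall t, 0 <= t -> S 0 <= S t).
    { apply (nondecr S (fun s => (1 - S s ^ 2) * (1 - 2 * S s) + 9 / 4 * m s ^ 2)).
      - intros t. apply (H t).
      - intros t _. specialize (HA' t). specialize (Hb t).
        assert (0 <= (1 - S t ^ 2) * (1 - 2 * S t)) by (apply Rmult_le_pos; lra). nra. }
    set (d := Rmin (1 - S 0 ^2) (3/4)).
    assert (Hd0 : 0 < d) by (unfold d; apply Rmin_pos; [specialize (Hb 0)|]; lra).
    assert (Hdl : forall t, 0 <= t -> d <= 1 - S t ^2).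
    { intros t Ht. specialize (Hmono t Ht). specialize (HA' t).
      destruct (Rle_or_lt 0 (S t)).
      - assert (S t ^2 <= 1/4) by nra. pose proof (Rmin_r (1 - S 0 ^2) (3/4)). fold d in H2. lra.
      - assert (S t ^2 <= S 0 ^2) by nra. pose proof (Rmin_l (1 - S 0 ^2) (3/4)). fold d in H2. lra. }
    set (h := fun s => (S s - 1/2) * exp ((2*d)*s)).
    assert (Hh : forall t, 0 <= t -> h 0 <= h t).
    { apply (nondecr h (fun s => ((1 - S s ^ 2) * (1 - 2 * S s) + 9 / 4 * m s ^ 2 + 2*d * (S s - 1/2)) * exp ((2*d)*s))).
      - intros t. destruct (H t) as (Hm & Hn & HS & Hc & Hm0 & Hn0). exact (d_gexp S _ t _ HS).
      - intros t Ht. specialize (Hdl t Ht). specialize (HA' t). pose proof (exp_pos ((2*d)*t)).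
        apply Rmult_le_pos; [|lra].
        replace ((1 - S t ^ 2) * (1 - 2 * S t)) with (-2 * (1 - S t^2) * (S t - 1/2)) by field.
        assert (0 <= (S t - 1/2) * (d - (1 - S t^2))) by nra.
        nra. }
    assert (Hg0 : 0 <= - (S 0 - 1/2)) by (specialize (HA' 0); lra).
    intros eps He. destruct (exp_small _ (2*d) Hg0 ltac:(lra) eps He) as [M HM].
    exists (Rmax M 0). intros t Ht.
    assert (Mt : M < t) by (eapply Rle_lt_trans; [apply Rmax_l| exact Ht]).
    assert (Tt : 0 <= t) by (left; eapply Rle_lt_trans; [apply Rmax_r| exact Ht]).
    specialize (HM t Mt). specialize (Hh t Tt). specialize (HA' t).
    pose proof (exp_pos ((2*d)*t)).
    unfold h in Hh. replace ((2*d)*0) with 0 in Hh by ring. rewrite exp_0, Rmult_1_r in Hh.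
    assert (- (S t - 1/2) <= - (S 0 - 1/2) * / exp ((2*d)*t)).
    { apply (Rmult_le_reg_r (exp ((2*d)*t))); auto. rewrite (Rmult_assoc (- (S 0 - 1/2))), Rinv_l; lra. }
    rewrite Rabs_left1; lra.
Qed.
Lemma m_lim S m n : RS S m n -> EvL m 0.
Proof.
  intros H. destruct (S_lim S m n H (1/4) ltac:(lra)) as [T1 HT1].
  set (z := fun s => - m s * exp (1/2 * s)).
  assert (Hz : forall t, T1 + 1 <= t -> z t <= z (T1 + 1)).
  { apply (nonincr z (fun s => (- ((2 * S s ^ 2 - 4 * S s) * m s) - 1/2 * m s) * exp (1/2*s))).
    - intros t. destruct (H t) as (Hm & Hn & HS & Hc & Hm0 & Hn0). exact (d_mexp m _ t _ Hm).
    - intros t Ht. assert (Q : Rabs (S t - 1/2) < 1/4) by (apply HT1; lra).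
      apply Rabs_def2 in Q. destruct (H t) as (Hm & Hn & HS & Hc & Hm0 & Hn0).
      assert (2 * S t ^2 - 4 * S t + 1/2 < 0) by nra.
      pose proof (exp_pos (1/2*t)).
      replace ((- ((2 * S t ^ 2 - 4 * S t) * m t) - 1/2 * m t)) with ((- m t) * (2 * S t ^2 - 4 * S t + 1/2)) by field.
      assert ((- m t) * (2 * S t ^2 - 4 * S t + 1/2) < 0) by nra. nra. }
  assert (Hz0 : 0 <= z (T1 + 1)).
  { unfold z. destruct (H (T1+1)) as (_ & _ & _ & _ & Hm0 & _). pose proof (exp_pos (1/2*(T1+1))). nra. }
  intros eps He. destruct (exp_small _ (1/2) Hz0 ltac:(lra) eps He) as [M HM].
  exists (Rmax M (T1+1)). intros t Ht.
  assert (Mt : M < t) by (eapply Rle_lt_trans; [apply Rmax_l| exact Ht]).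
  assert (Tt : T1 + 1 <= t) by (left; eapply Rle_lt_trans; [apply Rmax_r| exact Ht]).
  specialize (HM t Mt). specialize (Hz t Tt).
  destruct (H t) as (_ & _ & _ & _ & Hm0 & _).
  pose proof (exp_pos (1/2*t)).
  assert (- m t <= z (T1+1) * / exp (1/2*t)).
  { apply (Rmult_le_reg_r (exp (1/2*t))); auto. rewrite (Rmult_assoc (z (T1+1))), Rinv_l by lra.
    change (z t) with (- m t * exp (1/2*t)) in Hz. lra. }
  rewrite Rminus_0_r, Rabs_left; lra.
Qed.

Lemma x_lim S m n : RS S m n -> EvL (fun t => m t * n t) (- (1/4)).
Proof.
  intros H eps He. set (e := Rmin eps 1).
  assert (He0 : 0 < e) by (unfold e; apply Rmin_pos; lra).
  assert (He1 : e <= 1) by apply Rmin_r. assert (He2 : e <= eps) by apply Rmin_l.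
  destruct (S_lim S m n H e He0) as [M1 H1]. destruct (m_lim S m n H e He0) as [M2 H2].
  exists (Rmax M1 M2). intros t Ht.
  assert (A : Rabs (S t - 1/2) < e) by (apply H1; eapply Rle_lt_trans; [apply Rmax_l| exact Ht]).
  assert (B : Rabs (m t - 0) < e) by (apply H2; eapply Rle_lt_trans; [apply Rmax_r| exact Ht]).
  apply Rabs_def2 in A. apply Rabs_def2 in B.
  destruct (H t) as (_ & _ & _ & Hc & Hm0 & _).
  assert (X : m t * n t - - (1/4) = ((S t - 1/2) * (S t + 1/2) + 3/4 * m t ^2) / 3) by (field_simplify; nra).
  rewrite X. apply Rabs_def1.
  - assert ((S t - 1/2) * (S t + 1/2) < 2 * e) by nra. assert (m t ^2 < e) by nra. lra.
  - assert (- (2 * e) < (S t - 1/2) * (S t + 1/2)) by nra. assert (0 <= m t ^2) by nra. lra.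
Qed.

Lemma n_lim S m n : RS S m n -> is_lim n p_infty p_infty.
Proof.
  intros H. apply is_lim_spec. intros M. simpl.
  set (M' := Rmax M 1).
  assert (HM1 : 1 <= M') by apply Rmax_r. assert (HM2 : M <= M') by apply Rmax_l.
  destruct (x_lim S m n H (1/8) ltac:(lra)) as [M1 H1].
  assert (Hp : 0 < / (8 * M')) by (apply Rinv_0_lt_compat; lra).
  destruct (m_lim S m n H _ Hp) as [M2 H2].
  exists (Rmax M1 M2). intros t Ht.
  assert (A : Rabs (m t * n t - - (1/4)) < 1/8) by (apply H1; eapply Rle_lt_trans; [apply Rmax_l| exact Ht]).
  assert (B : Rabs (m t - 0) < / (8 * M')) by (apply H2; eapply Rle_lt_trans; [apply Rmax_r| exact Ht]).
  apply Rabs_def2 in A. apply Rabs_def2 in B.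
  destruct (H t) as (_ & _ & _ & Hc & Hm0 & Hn0).
  assert (B' : (- m t) * (8 * M') < 1).
  { replace 1 with (/ (8 * M') * (8 * M')) by (field; lra). apply Rmult_lt_compat_r; lra. }
  assert (M' < n t) by nra. lra.
Qed.

Theorem mainTheorem13 (N1 N2 N3 Sp Sm : R -> R) :
  WH_solution N1 N2 N3 Sp Sm ->
  (forall t, N1 t < 0) ->
  (forall t, N2 t = N3 t /\ 0 < N2 t) ->
  (forall t, Sm t = 0) ->
  is_lim Sp p_infty (Finite (1 / 2)) /\
  is_lim N1 p_infty (Finite 0) /\
  is_lim N2 p_infty p_infty /\
  is_lim (fun t => N1 t * N2 t) p_infty (Finite (- (1 / 4))).
Proof.
  intros HW H1 H23 Hsm.
  assert (HR : RS Sp N1 N2).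
  { intros t. destruct (HW t) as (D1 & D2 & D3 & DS & DSm & C).
    destruct (H23 t) as (E23 & Hn). pose proof (H1 t) as Hm. rewrite <- E23 in C.
    rewrite (Hsm t) in C, D1, D2, DS.
    unfold WH_q, WH_Sp in *. rewrite <- E23 in DS.
    split; [|split; [|split; [|split]]]; auto.
    - eapply deq; [exact D1|]. ring.
    - eapply deq; [exact D2|]. ring.
    - eapply deq; [exact DS|]. nra.
    - nra. }
  split; [|split; [|split]].
  - apply EvL_lim. exact (S_lim _ _ _ HR).
  - apply EvL_lim. exact (m_lim _ _ _ HR).
  - exact (n_lim _ _ _ HR).
  - apply EvL_lim. exact (x_lim _ _ _ HR).
Qed.
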